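(* Let $\Phi:\{1,\dots,B\}\to\mathcal{A}=\{1,\dots,A\}$ and let $\Delta(\varepsilon)$ be a $B\times B$ stochastic matrix family normally parameterized by $\varepsilon\ge0$. Let $v=v(\varepsilon),\hat v=\hat v(\varepsilon):[0,\infty)\to W$ be mappings analytic at $\varepsilon=0$, and let $z_{-n}^0\in\mathcal{A}^{n+1}$ and $k\ge0$ be such that $\mathrm{ord}(p_v(z_{-n}^{-1}))\le k$ and $\mathrm{ord}(p_{\hat v}(z_{-n}^{-1}))\le k$. Then $b_{v,j}(z_{-n}^0)=b_{\hat v,j}(z_{-n}^0)$ for all $j$ with $0\le j\le n-4k-1$.
   Context: $W=\{w\in\mathbb{R}^B: w_i\ge0,\ \sum_i w_i=1\}$. For $a\in\mathcal{A}$, $\Delta_a$ is the $B\times B$ matrix with $\Delta_a(i,j)=\Delta(i,j)$ if $\Phi(j)=a$ and $0$ otherwise. $\Delta(\varepsilon)$ is normally parameterized if (i) each entry is analytic at $\varepsilon=0$, (ii) for $\varepsilon>0$, $\Delta(\varepsilon)$ is non-negative and irreducible, (iii) for every $a$, $\Delta_a(0)$ is the zero matrix or has rank one. For a mapping $v$ and a sequence $z_{-n}^0$, $p_v(z_{-n}^{-1})=v\Delta_{z_{-n}}\cdots\Delta_{z_{-1}}\mathbf{1}$, $p_v(z_{-n}^{0})=v\Delta_{z_{-n}}\cdots\Delta_{z_{0}}\mathbf{1}$, and $p_v(z_0\mid z_{-n}^{-1})=p_v(z_{-n}^0)/p_v(z_{-n}^{-1})$; $b_{v,j}(z_{-n}^0)$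 is the coefficient of $\varepsilon^j$ in the Taylor expansion of $p_v(z_0\mid z_{-n}^{-1})$ at $\varepsilon=0$. For $f$ analytic at $0$, $\mathrm{ord}(f)$ is the degree of the first nonzero term of its Taylor series at $0$. *)

(* Defs.v *)
From Stdlib Require Import Reals.
From Coquelicot Require Import Coquelicot.
From mathcomp Require Import all_boot all_algebra.
From mathcomp Require Import Rstruct.

Set Implicit Arguments.
Unset Strict Implicit.
Unset Printing Implicit Defensive.

Import GRing.Theory Num.Theory.

(* a is the Taylor coefficient sequence at 0 of f: the power series with
   coefficients a converges on a neighbourhood (-r,r) of 0 and agrees with
   f for 0 < eps < r (the functions are only of interest for eps >= 0). *)
Definition is_taylor0 (a : nat -> R) (f : R -> R) : Prop :=
  exists r : R, (0 < r)%R /\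
    (forall x : R, (Rabs x < r)%R -> ex_pseries a x) /\
    (forall x : R, (0 < x < r)%R -> is_pseries a x (f x)).

Definition analytic0 (f : R -> R) : Prop :=
  exists a : nat -> R, is_taylor0 a f /\ f 0%R = a 0%nat.

Definition ord_le (f : R -> R) (k : nat) : Prop :=
  exists a : nat -> R, is_taylor0 a f /\ exists j : nat, (j <= k)%N /\ a j <> 0%R.

Definition in_W (B : nat) (w : 'rV[R]_B) : Prop :=
  (forall i, (0 <= w ord0 i)%R) /\ (\sum_(i < B) w ord0 i = 1)%R.

Definition nonneg_mx (B : nat) (M : 'M[R]_B) : Prop :=
  forall i j, (0 <= M i j)%R.

Definition stochastic_mx (B : nat) (M : 'M[R]_B) : Prop :=
  nonneg_mx M /\ forall i, (\sum_(j < B) M i j = 1)%R.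

Definition irreducible_mx (B : nat) (M : 'M[R]_B) : Prop :=
  forall i j, exists m : nat, (0 < (M ^+ m) i j)%R.

Definition Delta_a (A B : nat) (Phi : 'I_B -> 'I_A) (M : 'M[R]_B) (a : 'I_A)
  : 'M[R]_B := \matrix_(i, j) (if Phi j == a then M i j else 0%R).

Definition normally_parameterized (A B : nat) (Phi : 'I_B -> 'I_A)
  (Delta : R -> 'M[R]_B) : Prop :=
  (forall i j, analytic0 (fun e => Delta e i j)) /\
  (forall e : R, (0 < e)%R -> nonneg_mx (Delta e) /\ irreducible_mx (Delta e)) /\
  (forall a : 'I_A, (\rank (Delta_a Phi (Delta 0%R) a) <= 1)%N).

Fixpoint row_word (A B : nat) (Phi : 'I_B -> 'I_A) (M : 'M[R]_B)
  (v : 'rV[R]_B) (w : seq 'I_A) : 'rV[R]_B :=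
  match w with
  | [::] => v
  | a :: w' => row_word Phi M (mulmx v (Delta_a Phi M a)) w'
  end.

Definition p_v (A B : nat) (Phi : 'I_B -> 'I_A) (Delta : R -> 'M[R]_B)
  (v : R -> 'rV[R]_B) (w : seq 'I_A) (e : R) : R :=
  (mulmx (row_word Phi (Delta e) (v e) w) (const_mx 1%R : 'cV[R]_B)) ord0 ord0.

(* eps |-> p_v(z_0 | z_{-n}^{-1}) for z = [:: z_{-n}; ...; z_{-1}; z_0],
   n = size z - 1 *)
Definition p_cond (A B : nat) (Phi : 'I_B -> 'I_A) (Delta : R -> 'M[R]_B)
  (v : R -> 'rV[R]_B) (z : seq 'I_A) (e : R) : R :=
  (p_v Phi Delta v z e / p_v Phi Delta v (take (size z).-1 z) e)%R.

(* Main.v *)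
Require Import Defs.
From Stdlib Require Import Reals.
From Coquelicot Require Import Coquelicot.
From mathcomp Require Import all_boot all_algebra.
From mathcomp Require Import Rstruct.
From Stdlib Require Import Lra Lia Classical.
From mathcomp Require Import zify.

Module P1.

Set Implicit Arguments.
Unset Strict Implicit.
Local Open Scope R_scope.
Ltac z0 := try change (GRing.zero : R) with 0 in *; try change (GRing.one : R) with 1 in *.

Definition T (a : nat -> R) (f : R -> R) : Prop :=
  Rbar_lt 0 (CV_radius a) /\
  exists r, 0 < r /\ forall x, 0 < x < r ->
     Rbar_lt (Rabs x) (CV_radius a) /\ f x = PSeries a x.

Lemma rad_pos (a : nat -> R) : Rbar_lt 0 (CV_radius a) ->
  exists r, 0 < r /\ forall x, Rabs x < r -> Rbar_lt (Rabs x) (CV_radius a).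
Proof.
  case: (CV_radius a) => [y| |] /= H.
  - exists y; split => // x Hx.
  - exists 1; split; [lra|] => x _; exact I.
  - done.
Qed.

Lemma ex_pseries_rad (a : nat -> R) (y : R) : ex_pseries a y ->
  Rbar_le (Rabs y) (CV_radius a).
Proof.
  move=> H. apply: Rbar_not_lt_le => Hlt.
  apply: (CV_disk_outside a y Hlt).
  have := ex_series_lim_0 _ H.
  apply: is_lim_seq_ext => n. rewrite pow_n_pow. rewrite /scal /= /mult /=. ring.
Qed.

Lemma is_taylor0_T a f : is_taylor0 a f -> T a f.
Proof.
  move=> [r [/RltP Hr [Hex Hval]]]; z0.
  have Hrad : Rbar_le (Rabs (r/2)) (CV_radius a).
    apply: ex_pseries_rad; apply: Hex; apply/RltP; rewrite Rabs_pos_eq; lra.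
  split.
  - apply: Rbar_lt_le_trans Hrad. rewrite Rabs_pos_eq /=; lra.
  - exists (r/2); split; first lra. move=> x Hx. split.
    + apply: Rbar_lt_le_trans Hrad. rewrite (Rabs_pos_eq x) ?(Rabs_pos_eq (r/2)) /=; lra.
    + symmetry; apply: is_pseries_unique. apply: Hval. apply/andP; split; apply/RltP; z0; lra.
Qed.

Lemma T_is_taylor0 a f : T a f -> is_taylor0 a f.
Proof.
  move=> [Hrad [r [Hr H]]].
  case: (rad_pos Hrad) => rho [Hrho Hin].
  exists (Rmin r rho); split; first by apply/RltP; z0; apply: Rmin_pos.
  split.
  - move=> x /RltP Hx. apply: CV_radius_inside. apply: Hin.
    have := Rmin_r r rho; lra.
  - move=> x /andP [/RltP Hx1 /RltP Hx2]; z0.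
    have [_ ->] := H x (conj Hx1 (Rlt_le_trans _ _ _ Hx2 (Rmin_l _ _))).
    apply: PSeries_correct. apply: CV_radius_inside. apply: Hin.
    have := Rmin_r r rho. rewrite Rabs_pos_eq; lra.
Qed.

End P1.
Import P1.

Module P2.
Set Implicit Arguments.
Unset Strict Implicit.
Local Open Scope R_scope.

Lemma T_ext a f g : T a f -> (exists r, 0 < r /\ forall x, 0 < x < r -> f x = g x) -> T a g.
Proof.
  move=> [Hrad [r [Hr H]]] [r' [Hr' E]]. split => //.
  exists (Rmin r r'); split; first by apply: Rmin_pos.
  move=> x Hx. have h1 := Rmin_l r r'. have h2 := Rmin_r r r'.
  have [H1 H2] := H x (ltac:(split; lra)).
  split => //. rewrite -H2. symmetry. apply: E. lra.
Qed.

Lemma T_ext0 a f g : T a f -> (forall x, 0 < x -> f x = g x) -> T a g.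
Proof. move=> H E. apply: T_ext H _. exists 1; split; [lra|]. move=> x Hx; apply: E; lra. Qed.

Definition cst (c : R) (n : nat) : R := if n is O then c else 0.

Lemma rad_cst c : CV_radius (cst c) = p_infty.
Proof.
  rewrite -CV_radius_decr_1. rewrite -CV_radius_const_0. apply: CV_radius_ext.
  by case.
Qed.

Lemma PSeries_cst c x : PSeries (cst c) x = c.
Proof.
  rewrite PSeries_decr_1; last by apply: CV_radius_inside; rewrite rad_cst.
  rewrite (PSeries_ext (PS_decr_1 (cst c)) (fun _ => 0)); last by case.
  rewrite PSeries_const_0 /=. ring.
Qed.

Lemma T_const c : T (cst c) (fun _ => c).
Proof.
  split; first by rewrite rad_cst.
  exists 1; split; [lra|] => x Hx; split; first by rewrite rad_cst.
  by rewrite PSeries_cst.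
Qed.

Lemma Rbar_min_lt0 (u v : Rbar) (y : R) : Rbar_lt y u -> Rbar_lt y v -> Rbar_lt y (Rbar_min u v).
Proof. move=> Hu Hv. by apply: Rbar_min_case. Qed.

Lemma T_plus a b f g : T a f -> T b g -> T (PS_plus a b) (fun x => f x + g x).
Proof.
  move=> [Ha [r [Hr H]]] [Hb [r' [Hr' H']]].
  have Hp := CV_radius_plus a b.
  split. apply: Rbar_lt_le_trans Hp. by apply: Rbar_min_lt0.
  exists (Rmin r r'); split; first by apply: Rmin_pos.
  move=> x Hx. have h1 := Rmin_l r r'. have h2 := Rmin_r r r'.
  have [H1 H2] := H x (ltac:(split; lra)).
  have [H1' H2'] := H' x (ltac:(split; lra)).
  split. apply: Rbar_lt_le_trans Hp. by apply: Rbar_min_lt0.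
  rewrite PSeries_plus; try apply: CV_radius_inside => //. by rewrite H2 H2'.
Qed.

Lemma T_mult a b f g : T a f -> T b g -> T (PS_mult a b) (fun x => f x * g x).
Proof.
  move=> [Ha [r [Hr H]]] [Hb [r' [Hr' H']]].
  set x0 := Rmin r r' / 2.
  have hm := Rmin_pos _ _ Hr Hr'. have h1 := Rmin_l r r'. have h2 := Rmin_r r r'.
  have [A1 _] := H x0 (ltac:(rewrite /x0; lra)).
  have [B1 _] := H' x0 (ltac:(rewrite /x0; lra)).
  have Hrad := ex_pseries_rad (ex_pseries_mult _ _ _ A1 B1).
  have x0p : 0 < x0 by rewrite /x0; lra.
  rewrite Rabs_pos_eq in Hrad; last lra.
  split. apply: Rbar_lt_le_trans Hrad => /=. lra.
  exists x0; split => //.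
  move=> x Hx.
  have [H1 H2] := H x (ltac:(rewrite /x0 in Hx; lra)).
  have [H1' H2'] := H' x (ltac:(rewrite /x0 in Hx; lra)).
  split. apply: Rbar_lt_le_trans Hrad. rewrite Rabs_pos_eq /=; lra.
  by rewrite PSeries_mult // H2 H2'.
Qed.

Lemma T_scal c a f : T a f -> T (PS_mult (cst c) a) (fun x => c * f x).
Proof. move=> H. exact: (T_mult (T_const c) H). Qed.

Lemma rad_incr a m : CV_radius (PS_incr_n a m) = CV_radius a.
Proof. elim: m => [//|m IH] /=. by rewrite CV_radius_incr_1. Qed.

Lemma incr_lt a m j : (j < m)%coq_nat -> PS_incr_n a m j = 0.
Proof.
  elim: m j => [|m IH] j Hj /=; first lia.
  case: j Hj => [|j] Hj //=. apply: IH. lia.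
Qed.

Lemma T_incr a f m : T a f -> T (PS_incr_n a m) (fun x => x ^ m * f x).
Proof.
  move=> [Ha [r [Hr H]]]. rewrite /T rad_incr. split => //.
  exists r; split => // x Hx. have [H1 H2] := H x Hx. split => //.
  by rewrite PSeries_incr_n H2.
Qed.

Lemma rad_decr a m : CV_radius (PS_decr_n a m) = CV_radius a.
Proof.
  elim: m a => [|m IH] a.
  - apply: CV_radius_ext => n. by [].
  - rewrite (CV_radius_ext (PS_decr_n a m.+1) (PS_decr_n (PS_decr_1 a) m)).
    + by rewrite IH CV_radius_decr_1.
    + move=> n. by rewrite /PS_decr_n /PS_decr_1.
Qed.

Lemma T_decr a f m : T a f -> (forall k, (k < m)%coq_nat -> a k = 0) ->
  T (PS_decr_n a m) (fun x => f x / x ^ m).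
Proof.
  move=> [Ha [r [Hr H]]] Hz. rewrite /T rad_decr. split => //.
  exists r; split => // x Hx. have [H1 H2] := H x Hx. split => //.
  rewrite H2 (PSeries_decr_n_aux a m x) //. field. apply: pow_nonzero. lra.
Qed.

Lemma T_decr1 a f : T a f -> T (PS_decr_1 a) (fun x => (f x - a O) / x).
Proof.
  move=> [Ha [r [Hr H]]]. rewrite /T CV_radius_decr_1. split => //.
  exists r; split => // x Hx. have [H1 H2] := H x Hx. split => //.
  rewrite H2 (PSeries_decr_1 a x); last by apply: CV_radius_inside.
  field. lra.
Qed.

End P2.
Import P2.

Module P3.
Set Implicit Arguments.
Unset Strict Implicit.
Local Open Scope R_scope.

Lemma cont0 (F : R -> R) : continuity_pt F 0 ->
  forall eps, 0 < eps -> exists d, 0 < d /\ forall x, 0 < x < d -> Rabs (F x - F 0) < eps.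
Proof.
  move=> Hc eps Heps. case: (Hc eps Heps) => alp [Halp Hal].
  exists alp; split => // x Hx. have := Hal x. simpl. rewrite /R_dist. apply.
  split. split => //. lra. rewrite Rminus_0_r Rabs_pos_eq; lra.
Qed.

Lemma PS_cont0 a : Rbar_lt 0 (CV_radius a) ->
  forall eps, 0 < eps -> exists d, 0 < d /\ forall x, 0 < x < d -> Rabs (PSeries a x - a O) < eps.
Proof.
  move=> Ha eps Heps. rewrite -PSeries_0. apply: cont0 => //.
  apply: PSeries_continuity. by rewrite Rabs_R0.
Qed.

Lemma L0 a b f g : T a f -> T b g ->
  (exists r, 0 < r /\ forall x, 0 < x < r -> Rabs (f x) <= Rabs (g x)) ->
  Rabs (a O) <= Rabs (b O).
Proof.
  move=> [Ha [r [Hr H]]] [Hb [r' [Hr' H']]] [r'' [Hr'' Hle]].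
  apply: Rnot_lt_le => Hlt.
  set eps := (Rabs (a O) - Rabs (b O)) / 3.
  have Heps : 0 < eps by rewrite /eps; lra.
  case: (PS_cont0 Ha Heps) => d [Hd Hda].
  case: (PS_cont0 Hb Heps) => d' [Hd' Hdb].
  set x := Rmin (Rmin r r') (Rmin r'' (Rmin d d')) / 2.
  have hx1 : 0 < Rmin (Rmin r r') (Rmin r'' (Rmin d d')).
    repeat apply: Rmin_pos => //.
  have m1 := Rmin_l (Rmin r r') (Rmin r'' (Rmin d d')).
  have m2 := Rmin_r (Rmin r r') (Rmin r'' (Rmin d d')).
  have m3 := Rmin_l r r'. have m4 := Rmin_r r r'.
  have m5 := Rmin_l r'' (Rmin d d'). have m6 := Rmin_r r'' (Rmin d d').
  have m7 := Rmin_l d d'. have m8 := Rmin_r d d'.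
  have hx : 0 < x by rewrite /x; lra.
  have [_ E1] := H x (ltac:(rewrite /x; split; lra)).
  have [_ E2] := H' x (ltac:(rewrite /x; split; lra)).
  have L := Hle x (ltac:(rewrite /x; split; lra)).
  have A := Hda x (ltac:(rewrite /x; split; lra)).
  have B := Hdb x (ltac:(rewrite /x; split; lra)).
  rewrite E1 E2 in L. rewrite /eps in A B.
  move: L A B. set u := PSeries a x. set v := PSeries b x.
  move=> L A B.
  have t1 := Rabs_triang_inv (a O) u. have t2 := Rabs_triang_inv v (b O).
  rewrite Rabs_minus_sym in t1. lra.
Qed.

Lemma zero_seq_T : T (fun _ => 0) (fun _ => 0).
Proof.
  split; first by rewrite CV_radius_const_0.
  exists 1; split; [lra|] => x _; split; first by rewrite CV_radius_const_0.
  by rewrite PSeries_const_0.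
Qed.

Lemma L_bound m : forall a b f g, T a f -> T b g ->
  (exists r, 0 < r /\ forall x, 0 < x < r -> Rabs (f x) <= Rabs (g x)) ->
  (forall i, (i < m)%coq_nat -> b i = 0) -> forall i, (i < m)%coq_nat -> a i = 0.
Proof.
  elim: m => [|m IH] a b f g Ta Tb Hle Hb i Hi; first lia.
  have a0 : a O = 0.
    have := L0 Ta Tb Hle. rewrite (Hb O) ?Rabs_R0; last lia.
    move=> h. have := Rabs_pos (a O). move=> h'. apply: Rabs_eq_0. lra.
  case: i Hi => [//|i] Hi.
  have Ta' := T_decr1 Ta. have Tb' := T_decr1 Tb.
  have := IH _ _ _ _ Ta' Tb' _ _ i (ltac:(lia)). apply.
  - case: Hle => r [Hr Hle]. exists r; split => // x Hx.
    rewrite a0 (Hb O) ?Rminus_0_r /Rdiv ?Rabs_mult; last lia.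
    apply: Rmult_le_compat_r; [apply: Rabs_pos | apply: Hle => //].
  - move=> k Hk. rewrite /PS_decr_1. apply: Hb. lia.
Qed.

Lemma T_zero a f : T a f -> (exists r, 0 < r /\ forall x, 0 < x < r -> f x = 0) ->
  forall i, a i = 0.
Proof.
  move=> Ta [r [Hr E]] i.
  apply: (L_bound (m := i.+1) Ta zero_seq_T) => //.
  exists r; split => // x Hx. rewrite E // Rabs_R0; lra.
Qed.

Lemma sum_cst_aux c b m n : sum_f_R0 (fun k => cst c k * b (m - k)%coq_nat) n = c * b m.
Proof.
  elim: n => [|n IH] /=. by rewrite Nat.sub_0_r. rewrite IH. ring.
Qed.

Lemma PS_mult_cst c b n : PS_mult (cst c) b n = c * b n.
Proof. exact: sum_cst_aux. Qed.

Lemma T_opp a f : T a f -> T (PS_mult (cst (-1)) a) (fun x => - f x).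
Proof. move=> H. apply: T_ext0 (T_scal (-1) H) _ => x _. ring. Qed.

Lemma T_unique a b f g : T a f -> T b g ->
  (exists r, 0 < r /\ forall x, 0 < x < r -> f x = g x) -> forall i, a i = b i.
Proof.
  move=> Ta Tb [r [Hr E]] i.
  have Td := T_plus Ta (T_opp Tb).
  have Z : exists r, 0 < r /\ forall x, 0 < x < r -> f x + - g x = 0.
    exists r; split => // x Hx. rewrite (E x Hx); ring.
  have := T_zero Td Z i.
  rewrite /PS_plus PS_mult_cst /Hierarchy.plus /=. lra.
Qed.

End P3.
Import P3.

Module P4.
Set Implicit Arguments.
Unset Strict Implicit.
Local Open Scope R_scope.

Fixpoint bf (a : nat -> R) (n : nat) : nat -> R :=
  match n with
  | O => fun _ => / a O
  | S m => fun i => if Nat.leb i m then bf a m i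
                    else - / a O * sum_f_R0 (fun k => a (S k) * bf a m (m - k)%coq_nat) m
  end.

Definition binv a n := bf a n n.

Lemma bf_S a m i : bf a (S m) i = if Nat.leb i m then bf a m i
    else - / a O * sum_f_R0 (fun k => a (S k) * bf a m (m - k)%coq_nat) m.
Proof. by []. Qed.

Lemma bf_stable a m i : (i <= m)%coq_nat -> bf a m i = binv a i.
Proof.
  elim: m i => [|m IH] i Hi.
  - have -> : i = O by lia. by [].
  - case: (Nat.eq_dec i (S m)) => [->|Hne]; first by [].
    rewrite bf_S. have -> : Nat.leb i m = true by apply/Nat.leb_le; lia.
    apply: IH. lia.
Qed.

Lemma binv_S a m : binv a (S m) = - / a O * sum_f_R0 (fun k => a (S k) * binv a (m - k)%coq_nat) m.
Proof.
  rewrite /binv bf_S. have -> : Nat.leb (S m) m = false by apply/Nat.leb_gt; lia.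
  f_equal. apply PartSum.sum_eq => k Hk. f_equal. apply: bf_stable. lia.
Qed.

Lemma binv_mult a n : a O <> 0 -> PS_mult a (binv a) n = cst 1 n.
Proof.
  move=> Ha. case: n => [|m].
  - rewrite /PS_mult /= /binv /=. field. done.
  - rewrite /PS_mult decomp_sum; last lia.
    rewrite /= binv_S. field. done.
Qed.

Lemma geom_sum q m : q <> 1 -> sum_f_R0 (fun k => q ^ (S k)) m = (q - q ^ (m + 2)) / (1 - q).
Proof.
  move=> Hq. have Hq' : 1 - q <> 0 by lra.
  elim: m => [|m IH] /=. field => //. rewrite IH.
  rewrite (_ : (m + 2)%N = S (S m)); last by rewrite addn2.
  rewrite /=. field => //.
Qed.

Lemma bound_coeffs a : Rbar_lt 0 (CV_radius a) ->
  exists r1 M, 0 < r1 /\ forall n, Rabs (a n * r1 ^ n) <= M.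
Proof.
  move=> Ha. case: (rad_pos Ha) => rho [Hrho Hin].
  have Hx : Rbar_lt (rho / 2) (CV_radius a).
    have := Hin (rho/2). rewrite !Rabs_pos_eq; try lra. apply. lra.
  have [Hub Hlub] := CV_radius_bounded a.
  case: (classic (exists y, (exists M, forall n, Rabs (a n * y ^ n) <= M) /\ rho / 2 < y)).
  - move=> [y [[M HM] Hy]]. exists y, M. split => //. lra.
  - move=> Hno. exfalso.
    have : Rbar_le (CV_radius a) (rho / 2).
      apply: Hlub => y Hy /=. apply: Rnot_lt_le => Hlt. apply: Hno. by exists y.
    move=> Hle. have := Rbar_lt_le_trans _ _ _ Hx Hle. rewrite /=. lra.
Qed.

Lemma binv_bound a r1 M : a O <> 0 -> 0 < r1 -> (forall n, Rabs (a n * r1 ^ n) <= M) ->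
  let s := / r1 in let be := / Rabs (a O) in let L := 2 + 2 * M * be in
  forall n, Rabs (binv a n) <= be * (L * s) ^ n.
Proof.
  move=> Ha Hr1 HM s be L.
  have Hbe : 0 < be by apply: Rinv_0_lt_compat; apply: Rabs_pos_lt.
  have HM0 : 0 <= M. have := HM O. have := Rabs_pos (a O * r1 ^ 0). lra.
  have Hs : 0 < s by apply: Rinv_0_lt_compat.
  have HL : 2 <= L. rewrite /L. have := Rmult_le_pos _ _ HM0 (Rlt_le _ _ Hbe). lra.
  have Han : forall n, Rabs (a n) <= M * s ^ n.
    move=> n. have := HM n. rewrite Rabs_mult (Rabs_pos_eq (r1 ^ n)); last by apply: pow_le; lra.
    move=> h. rewrite /s pow_inv.
    have Hp : 0 < r1 ^ n by apply: pow_lt.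
    apply: (Rmult_le_reg_r (r1 ^ n)) => //. field_simplify; last lra. lra.
  set t := L * s.
  have Ht : 0 < t by rewrite /t; nra.
  suff H : forall m k, (k <= m)%coq_nat -> Rabs (binv a k) <= be * t ^ k.
    move=> n. exact: (H n n (le_n n)).
  elim => [|m IH] k Hk.
  - have -> : k = O by lia. rewrite /binv /= Rabs_inv. rewrite -/be. lra.
  - case: (Nat.eq_dec k (S m)) => [->|Hne]; last by apply: IH; lia.
    rewrite binv_S Rabs_mult Rabs_Ropp Rabs_inv -/be.
    apply: Rmult_le_compat_l; first lra.
    apply: Rle_trans (sum_f_R0_triangle _ _) _.
    set q := / L.
    have Hq0 : 0 < q by rewrite /q; apply: Rinv_0_lt_compat; lra.
    have Hq1 : q <= / 2 by rewrite /q; apply: Rinv_le_contravar; lra.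
    apply: Rle_trans (sum_Rle _ (fun k => q ^ (S k) * (M * be * t ^ (S m))) m _) _.
    + move=> k0 Hk0. rewrite Rabs_mult.
      have h1 := Han (S k0). have h2 := IH (m - k0)%coq_nat (ltac:(lia)).
      apply: Rle_trans (Rmult_le_compat _ _ _ _ (Rabs_pos _) (Rabs_pos _) h1 h2) _.
      have -> : t ^ (S m) = t ^ (S k0) * t ^ (m - k0)%coq_nat.
        rewrite -pow_add. f_equal. lia.
      have -> : s = q * t by rewrite /q /t; field; lra.
      rewrite !Rpow_mult_distr. apply: Req_le. ring.
    + rewrite -scal_sum geom_sum; last lra.
      have Hq2 : 0 <= q ^ (m + 2) by apply: pow_le; lra.
      have Hmb : 0 <= M * be by apply: Rmult_le_pos; lra.
      have Htm : 0 < t ^ S m by apply: pow_lt.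
      have E : q / (1 - q) * (M * be) <= 1.
        rewrite /q. have HL0 : 0 < L by lra. field_simplify; try lra.
        apply: (Rmult_le_reg_r (L - 1)); first lra. field_simplify; try lra.
        rewrite /L. lra.
      have Hmid : (q - q ^ (m + 2)) / (1 - q) <= q / (1 - q).
        apply: Rmult_le_compat_r. apply: Rlt_le; apply: Rinv_0_lt_compat; lra. lra.
      have Hc : 0 <= M * be * t ^ S m by apply: Rmult_le_pos; lra.
      apply: Rle_trans (Rmult_le_compat_l _ _ _ Hc Hmid) _.
      have -> : M * be * t ^ S m * (q / (1 - q)) = (q / (1 - q) * (M * be)) * t ^ S m by ring.
      rewrite -{2}(Rmult_1_l (t ^ S m)). apply: Rmult_le_compat_r; lra.
Qed.


Lemma T_inv a f : T a f -> a O <> 0 ->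
  exists b, T b (fun x => / f x) /\ exists r, 0 < r /\ forall x, 0 < x < r -> f x <> 0.
Proof.
  move=> Ta Ha0. have [Ha [r [Hr H]]] := Ta.
  case: (bound_coeffs Ha) => r1 [M [Hr1 HM]].
  have Hbd := binv_bound Ha0 Hr1 HM.
  move: Hbd. set s := / r1. set be := / Rabs (a O). set L := 2 + 2 * M * be. move=> Hbd.
  have Hbe : 0 < be by apply: Rinv_0_lt_compat; apply: Rabs_pos_lt.
  have HM0 : 0 <= M. have := HM O. have := Rabs_pos (a O * r1 ^ 0). lra.
  have Hs : 0 < s by apply: Rinv_0_lt_compat.
  have HL : 2 <= L. rewrite /L. have := Rmult_le_pos _ _ HM0 (Rlt_le _ _ Hbe). lra.
  set t := L * s. have Ht : 0 < t by rewrite /t; nra.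
  have Hradb : Rbar_le (/ t) (CV_radius (binv a)).
    have [Hub _] := CV_radius_bounded (binv a). apply: Hub. exists be => n.
    rewrite Rabs_mult (Rabs_pos_eq ((/t)^n)); last by apply: pow_le; apply: Rlt_le; apply: Rinv_0_lt_compat.
    have := Hbd n. move=> h. rewrite pow_inv.
    have Hp : 0 < t ^ n by apply: pow_lt.
    apply: (Rmult_le_reg_r (t ^ n)) => //. field_simplify; try lra.
    rewrite Rmult_comm. exact h.
  have Hti : 0 < / t by apply: Rinv_0_lt_compat.
  have Key : forall x, 0 < x < Rmin r (/ t) -> f x * PSeries (binv a) x = 1.
    move=> x Hx. have m1 := Rmin_l r (/t). have m2 := Rmin_r r (/t).
    have [H1 H2] := H x (ltac:(split; lra)).
    have H3 : Rbar_lt (Rabs x) (CV_radius (binv a)).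
      apply: Rbar_lt_le_trans Hradb. rewrite Rabs_pos_eq /=; lra.
    rewrite H2 -PSeries_mult //.
    rewrite (PSeries_ext _ (cst 1)); first by rewrite PSeries_cst.
    move=> n. by apply: binv_mult.
  have Hmin : 0 < Rmin r (/ t) by apply: Rmin_pos.
  exists (binv a). split.
  - split. apply: Rbar_lt_le_trans Hradb => /=. done.
    exists (Rmin r (/ t)); split => // x Hx. split.
    + apply: Rbar_lt_le_trans Hradb. have := Rmin_r r (/t). rewrite Rabs_pos_eq /=; lra.
    + have K := Key x Hx. have Hf : f x <> 0 by move=> h; rewrite h in K; lra.
      apply: (Rmult_eq_reg_l (f x)) => //. rewrite K. field. done.
  - exists (Rmin r (/ t)); split => // x Hx. have K := Key x Hx. move=> h; rewrite h in K; lra.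
Qed.

End P4.
Import P4.

Module P5.
Set Implicit Arguments.
Unset Strict Implicit.
Import GRing.Theory.

Definition An (f : R -> R) := exists a, T a f.

Lemma An_ext f g : An f -> (forall x, Rlt 0 x -> f x = g x) -> An g.
Proof. move=> [a H] E. exists a. exact: T_ext0 H E. Qed.

Lemma An_const c : An (fun _ => c).
Proof. exists (cst c). exact: T_const. Qed.

Lemma An_plus f g : An f -> An g -> An (fun x => Rplus (f x) (g x)).
Proof. move=> [a Ha] [b Hb]. exists (PS_plus a b). exact: T_plus. Qed.

Lemma An_mult f g : An f -> An g -> An (fun x => Rmult (f x) (g x)).
Proof. move=> [a Ha] [b Hb]. exists (PS_mult a b). exact: T_mult. Qed.

Lemma An_opp f : An f -> An (fun x => Ropp (f x)).
Proof. move=> [a Ha]. exists (PS_mult (cst (-1)) a). exact: T_opp. Qed.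

Lemma An_analytic0 f : analytic0 f -> An f.
Proof. move=> [a [H _]]. exists a. exact: is_taylor0_T. Qed.

Lemma An_sum (I : Type) (r : seq I) (P : pred I) (F : I -> R -> R) :
  (forall i, An (F i)) -> An (fun x => (\sum_(i <- r | P i) F i x)%R).
Proof.
  move=> HF. elim: r => [|i r IH].
  - apply: An_ext (An_const 0) _ => x _. by rewrite big_nil.
  - case HP: (P i).
    + apply: An_ext (An_plus (HF i) IH) _ => x _. by rewrite big_cons HP.
    + apply: An_ext IH _ => x _. by rewrite big_cons HP.
Qed.

Local Open Scope ring_scope.

Definition AM (m n : nat) (F : R -> 'M[R]_(m, n)) := forall i j, An (fun e => F e i j).


Lemma AM_mul m n p (F : R -> 'M[R]_(m, n)) (G : R -> 'M[R]_(n, p)) :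
  AM F -> AM G -> AM (fun e => F e *m G e).
Proof.
  move=> HF HG i j. apply: An_ext (@An_sum _ (index_enum 'I_n) xpredT (fun (k : 'I_n) e => Rmult (F e i k) (G e k j)) _) _.
  - move=> k. exact: An_mult.
  - move=> x _. by rewrite mxE.
Qed.

Lemma AM_add m n (F G : R -> 'M[R]_(m, n)) : AM F -> AM G -> AM (fun e => F e + G e).
Proof.
  move=> HF HG i j. apply: An_ext (An_plus (HF i j) (HG i j)) _ => x _. by rewrite mxE.
Qed.

Lemma AM_opp m n (F : R -> 'M[R]_(m, n)) : AM F -> AM (fun e => - F e).
Proof.
  move=> HF i j. apply: An_ext (An_opp (HF i j)) _ => x _. by rewrite mxE.
Qed.

Lemma AM_sub m n (F G : R -> 'M[R]_(m, n)) : AM F -> AM G -> AM (fun e => F e - G e).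
Proof. move=> HF HG. exact: AM_add HF (AM_opp HG). Qed.

Lemma AM_const m n (M : 'M[R]_(m, n)) : AM (fun _ => M).
Proof. move=> i j. exact: An_const. Qed.

Lemma AM_tr m n (F : R -> 'M[R]_(m, n)) : AM F -> AM (fun e => (F e)^T).
Proof. move=> HF i j. apply: An_ext (HF j i) _ => x _. by rewrite mxE. Qed.

Lemma AM_scale m n (s : R -> R) (F : R -> 'M[R]_(m, n)) : An s -> AM F -> AM (fun e => s e *: F e).
Proof. move=> Hs HF i j. apply: An_ext (An_mult Hs (HF i j)) _ => x _. by rewrite mxE. Qed.

Lemma AM_scale_pos m n (s : R -> R) (F : R -> 'M[R]_(m, n)) :
  An s -> AM F -> forall G : R -> 'M[R]_(m, n), (forall e, Rlt 0 e -> G e = s e *: F e) -> AM G.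
Proof.
  move=> Hs HF G E i j. apply: An_ext (AM_scale Hs HF i j) _ => x Hx. by rewrite E.
Qed.

Lemma small_antisym k (S : 'M[R]_k) : (k <= 1)%N -> S^T = - S -> S = 0.
Proof.
  move=> Hk HS. apply/matrixP => i j. rewrite [RHS]mxE.
  have Eij : i = j.
    apply: val_inj. have hi := leq_trans (ltn_ord i) Hk. have hj := leq_trans (ltn_ord j) Hk.
    rewrite ltnS leqn0 in hi. rewrite ltnS leqn0 in hj. by rewrite /= (eqP hi) (eqP hj).
  subst j.
  have := congr1 (fun M : 'M[R]_k => M i i) HS. rewrite !mxE. move=> h.
  have h' : S i i = Ropp (S i i) by [].
  change (GRing.zero : R) with (IZR 0). lra.
Qed.

Lemma rank1_antisym (B : nat) (Rm Y : 'M[R]_B) : (\rank Rm <= 1)%N -> Y^T = - Y ->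
  Rm *m Y *m Rm^T = 0.
Proof.
  move=> Hr HY. rewrite -(mulmx_base Rm) trmx_mul.
  move: (col_base Rm) (row_base Rm) => cb rb.
  have -> : cb *m rb *m Y *m (rb^T *m cb^T) = cb *m (rb *m Y *m rb^T) *m cb^T.
    by rewrite !mulmxA.
  suff -> : rb *m Y *m rb^T = 0 by rewrite mulmx0 mul0mx.
  apply: small_antisym => //.
  by rewrite !trmx_mul trmxK HY mulNmx mulmxN mulmxA.
Qed.

End P5.
Import P5.

Module P6.
Set Implicit Arguments.
Unset Strict Implicit.
Import GRing.Theory.

Lemma An_id : An (fun x => x).
Proof.
  exists (PS_incr_n (cst 1) 1). apply: T_ext0 (T_incr 1 (T_const 1)) _ => x _ /=. ring.
Qed.

Local Open Scope ring_scope.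

Section D.
Variables (A B : nat) (Phi : 'I_B -> 'I_A) (Delta : R -> 'M[R]_B).
Hypothesis Han : forall i j, analytic0 (fun e => Delta e i j).

Definition Da e a := Delta_a Phi (Delta e) a.
Definition Ea e a := Rinv e *: (Da e a - Da 0 a).

Lemma AM_Da a : AM (fun e => Da e a).
Proof.
  move=> i j. apply: An_ext (_ : An (fun e => if Phi j == a then Delta e i j else 0)) _.
  - case: (Phi j == a); [exact: An_analytic0 | exact: An_const].
  - move=> x _. by rewrite /Da /Delta_a mxE.
Qed.

Lemma AM_Ea a : AM (fun e => Ea e a).
Proof.
  move=> i j.
  have H : An (fun e => if Phi j == a then Rdiv (Rminus (Delta e i j) (Delta 0 i j)) e else 0).
    case: (Phi j == a); last exact: An_const.
    case: (Han i j) => c [Hc Hc0]. exists (PS_decr_1 c).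
    apply: T_ext0 (T_decr1 (is_taylor0_T Hc)) _ => x _. by rewrite Hc0.
  apply: An_ext H _ => x Hx. rewrite /Ea /Da /Delta_a !mxE.
  case: (Phi j == a); rewrite /Rdiv /Rminus.
  - by rewrite [RHS]mulrC.
  - by rewrite subrr mulr0.
Qed.


Lemma Da_split e a : e <> 0%R -> Da e a = Da 0 a + e *: Ea e a.
Proof.
  move=> He. rewrite /Ea scalerA.
  have -> : e * Rinv e = 1 by apply: mulfV; apply/eqP.
  by rewrite scale1r addrC subrK.
Qed.

Definition K (Y : R -> 'M[R]_B) a e :=
  Da 0 a *m Y e *m (Ea e a)^T + Ea e a *m Y e *m (Da 0 a)^T + e *: (Ea e a *m Y e *m (Ea e a)^T).

Lemma K_id (Y : R -> 'M[R]_B) a e : e <> 0%R -> (Y e)^T = - Y e -> (\rank (Da 0 a) <= 1)%N ->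
  Da e a *m Y e *m (Da e a)^T = e *: K Y a e.
Proof.
  move=> He HY Hr. rewrite (Da_split a He) /K.
  move: (Da 0 a) (Ea e a) (Y e) Hr HY => R0 E Y0 Hr HY.
  rewrite linearD /= linearZ /= !mulmxDl !mulmxDr (rank1_antisym Hr HY) add0r.
  rewrite -!scalemxAl -!scalemxAr !scalerDr scalerA.
  by rewrite addrA.
Qed.

Lemma K_antisym (Y : R -> 'M[R]_B) a e : (Y e)^T = - Y e -> (K Y a e)^T = - K Y a e.
Proof.
  move=> HY. rewrite /K. move: (Da 0 a) (Ea e a) (Y e) HY => R0 E Y0 HY.
  rewrite !linearD /= linearZ /= !trmx_mul !trmxK HY.
  rewrite !mulNmx !mulmxN !mulmxA scalerN ?opprD. congr (_ + _). by rewrite addrC.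
Qed.

Lemma AM_K (Y : R -> 'M[R]_B) a : AM Y -> AM (K Y a).
Proof.
  move=> HY. rewrite /K.
  have HE := AM_Ea a. have HR := AM_const (Da 0 a).
  apply: AM_add; [apply: AM_add|apply: AM_scale; first exact: An_id].
  - apply: AM_mul; [apply: AM_mul => // | exact: AM_tr].
  - apply: AM_mul; [apply: AM_mul => // | exact: AM_tr].
  - apply: AM_mul; [apply: AM_mul => // | exact: AM_tr].
Qed.

Hypothesis Hrank : forall a, (\rank (Delta_a Phi (Delta 0) a) <= 1)%N.

Lemma key (X : R -> 'M[R]_B) : AM X -> (forall e, (X e)^T = - X e) -> forall w : seq 'I_A,
  exists Y : R -> 'M[R]_B, AM Y /\ (forall e, (Y e)^T = - Y e) /\
   forall e, e <> 0%R -> forall v vh : 'rV[R]_B,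
     row_word Phi (Delta e) v w *m X e *m (row_word Phi (Delta e) vh w)^T
       = (pow e (size w)) *: (v *m Y e *m vh^T).
Proof.
  move=> HX HXa. elim => [|a w [Y [HY [HYa HYe]]]].
  - exists X; split => //; split => // e He v vh /=. by rewrite scale1r.
  - exists (K Y a); split; first exact: AM_K.
    split; first by move=> e; apply: K_antisym.
    move=> e He v vh /=. rewrite HYe //.
    have -> : v *m Delta_a Phi (Delta e) a *m Y e *m (vh *m Delta_a Phi (Delta e) a)^T
      = v *m (Da e a *m Y e *m (Da e a)^T) *m vh^T.
      by rewrite trmx_mul !mulmxA.
    rewrite K_id //; last exact: Hrank. rewrite -scalemxAr -scalemxAl scalerA. congr (_ *: _).
    change (Rmult (pow e (size w)) e = Rmult e (pow e (size w))). by rewrite Rmult_comm.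
Qed.
End D.

End P6.
Import P6.

Module P7.
Set Implicit Arguments.
Unset Strict Implicit.
Import GRing.Theory Num.Theory.

Lemma An_extr f g : An f -> (exists r, Rlt 0 r /\ forall x, Rlt 0 x /\ Rlt x r -> f x = g x) -> An g.
Proof. move=> [a H] E. exists a. exact: T_ext H E. Qed.

Local Open Scope ring_scope.
Ltac zz := try change (GRing.zero : R) with (IZR 0) in *; try change (GRing.one : R) with (IZR 1) in *.

Section W.
Variables (A B : nat) (Phi : 'I_B -> 'I_A) (Delta : R -> 'M[R]_B).

Lemma row_word_cat M (v : 'rV[R]_B) w1 w2 :
  row_word Phi M v (w1 ++ w2) = row_word Phi M (row_word Phi M v w1) w2.
Proof. by elim: w1 v => [|a w1 IH] v //=. Qed.

Hypothesis Han : forall i j, analytic0 (fun e => Delta e i j).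

Lemma AM_rw w : forall V : R -> 'rV[R]_B, AM V -> AM (fun e => row_word Phi (Delta e) (V e) w).
Proof.
  elim: w => [|a w IH] V HV //=.
  apply: (IH (fun e => V e *m Delta_a Phi (Delta e) a)).
  apply: AM_mul => //. exact: (AM_Da Phi Han a).
Qed.

Lemma rw_ge0 (M : 'M[R]_B) (w : seq 'I_A) : (forall i j, 0 <= M i j) -> forall v : 'rV[R]_B, (forall i, 0 <= v ord0 i) ->
  forall i, 0 <= row_word Phi M v w ord0 i.
Proof.
  move=> HM. elim: w => [|a w IH] v Hv //=.
  apply: IH => i. rewrite mxE. apply: sumr_ge0 => j _. apply: mulr_ge0 => //.
  rewrite /Delta_a mxE. by case: (Phi i == a).
Qed.

End W.

Section S.
Variables (A B : nat) (Phi : 'I_B -> 'I_A) (Delta : R -> 'M[R]_B).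
Variables (w : seq 'I_A) (z0 : 'I_A).
Hypothesis Hst : forall e : R, 0 <= e -> stochastic_mx (Delta e).

Definition onev : 'cV[R]_B := const_mx 1.
Definition Wf (V : R -> 'rV[R]_B) e := row_word Phi (Delta e) (V e) w.
Definition u e := Da Phi Delta e z0 *m onev.
Definition Dn V e := (Wf V e *m onev) ord0 ord0.
Definition Nm V e := (Wf V e *m u e) ord0 ord0.

Lemma NmDn V e : 0 <= e -> in_W (V e) -> 0 <= Nm V e /\ Nm V e <= Dn V e.
Proof.
  move=> He [HV _]. have [Hnn Hsum] := Hst He.
  have HW := rw_ge0 Phi w Hnn HV.
  have Hu : forall j, 0 <= u e j ord0 /\ u e j ord0 <= 1.
    move=> j. rewrite /u mxE. split.
    - apply: sumr_ge0 => l _. rewrite /Da /Delta_a !mxE. apply: mulr_ge0 => //.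
      by case: (Phi l == z0).
    - rewrite -(Hsum j). apply: ler_sum => l _. rewrite /Da /Delta_a /onev !mxE mulr1.
      by case: (Phi l == z0).
  rewrite /Nm /Dn !mxE. split.
  - apply: sumr_ge0 => j _. apply: mulr_ge0 => //. exact: (proj1 (Hu j)).
  - apply: ler_sum => j _. apply: ler_wpM2l; first exact: HW. rewrite [X in _ <= X]mxE. exact: (proj2 (Hu j)).
Qed.

End S.

Section S2.
Variables (A B : nat) (Phi : 'I_B -> 'I_A) (Delta : R -> 'M[R]_B).
Variables (w : seq 'I_A) (z0 : 'I_A).
Hypothesis Hst : forall e : R, 0 <= e -> stochastic_mx (Delta e).
Hypothesis Han : forall i j, analytic0 (fun e => Delta e i j).

Lemma AM_V (V : R -> 'rV[R]_B) : (forall i, analytic0 (fun e => V e ord0 i)) -> AM V.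
Proof. move=> H i j. rewrite (ord1 i). exact: An_analytic0. Qed.

Lemma An_Dn V : AM V -> An (Dn Phi Delta w V).
Proof.
  move=> HV. exact: (AM_mul (AM_rw Phi Han w HV) (AM_const (onev B)) ord0 ord0).
Qed.

Lemma An_Nm V : AM V -> An (Nm Phi Delta w z0 V).
Proof.
  move=> HV. exact: (AM_mul (AM_rw Phi Han w HV) (AM_mul (AM_Da Phi Han z0) (AM_const (onev B))) ord0 ord0).
Qed.

Lemma side V k : (forall e, 0 <= e -> in_W (V e)) -> (forall i, analytic0 (fun e => V e ord0 i)) ->
  ord_le (Dn Phi Delta w V) k ->
  exists k1, (k1 <= k)%N /\ exists (D1 : R -> R) r, Rlt 0 r /\ An (fun e => Rinv (D1 e)) /\
    (forall e, Rlt 0 e /\ Rlt e r -> Dn Phi Delta w V e = Rmult (pow e k1) (D1 e) /\ D1 e <> 0%R) /\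
    An (fun e => Rdiv (Nm Phi Delta w z0 V e) (Dn Phi Delta w V e)).
Proof.
  move=> HW HVa [a [Ha [j [Hj Haj]]]].
  zz.
  have HV := AM_V HVa.
  have Ta := is_taylor0_T Ha.
  have Hex : exists j, a j != 0 by exists j; apply/eqP.
  case: (ex_minnP Hex) => k1 /eqP Hk1 Hmin.
  exists k1; split. apply: leq_trans Hj. apply: Hmin. by apply/eqP.
  have Hz : forall i, (i < k1)%coq_nat -> a i = 0%R.
    move=> i Hi. case: (eqVneq (a i) 0) => // Hne. have := Hmin i Hne. move/leP. lia.
  have Td := T_decr Ta Hz.
  have [b [Tb [r [Hr Hnz]]]] := T_inv Td (ltac:(rewrite /PS_decr_n Nat.add_0_r; exact: Hk1)).
  exists (fun x => Rdiv (Dn Phi Delta w V x) (pow x k1)), r. split => //. split; first by exists b.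
  have Hpos : forall x, Rlt 0 x -> pow x k1 <> 0%R by move=> x Hx; apply: pow_nonzero; lra.
  split.
  - move=> e He. split; last exact: Hnz. rewrite /Rdiv (Rmult_comm _ (Rinv _)) -Rmult_assoc Rinv_r ?Rmult_1_l //. apply: Hpos. lra.
  - case: (An_Nm HV) => nn Tn.
    have Hb : exists r, Rlt 0 r /\ forall x, Rlt 0 x /\ Rlt x r ->
        Rle (Rabs (Nm Phi Delta w z0 V x)) (Rabs (Dn Phi Delta w V x)).
      exists (IZR 1); split; first lra. move=> x Hx. zz.
      have Hx0 : 0 <= x by apply/RleP; zz; lra.
      have [/RleP h1 /RleP h2] := NmDn Phi w z0 Hst Hx0 (HW x Hx0).
      zz. rewrite !Rabs_pos_eq; lra.
    have Hzn := L_bound Tn Ta Hb Hz.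
    have Tn' := T_decr Tn Hzn.
    have A1 : An (fun x => Rdiv (Nm Phi Delta w z0 V x) (pow x k1)) by exists (PS_decr_n nn k1).
    have A2 : An (fun x => Rinv (Rdiv (Dn Phi Delta w V x) (pow x k1))) by exists b.
    apply: An_extr (An_mult A1 A2) _.
    exists r; split => // x Hx. have := Hnz x Hx. have := Hpos x (proj1 Hx).
    move=> h1 h2. field. split => //. move=> h3. apply: h2. rewrite h3. rewrite /Rdiv. ring.
Qed.

End S2.

Lemma prod11 (a b : 'M[R]_(1,1)) : (a *m b^T) ord0 ord0 = a ord0 ord0 * b ord0 ord0.
Proof. by rewrite mxE big_ord1 mxE. Qed.

Lemma quad_id (B : nat) (P Q : 'rV[R]_B) (uu : 'cV[R]_B) :
  (P *m (uu *m (onev B)^T - (onev B) *m uu^T) *m Q^T) ord0 ord0 =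
  Rminus (Rmult ((P *m uu) ord0 ord0) ((Q *m (onev B)) ord0 ord0))
         (Rmult ((P *m (onev B)) ord0 ord0) ((Q *m uu) ord0 ord0)).
Proof.
  rewrite mulmxBr mulmxBl !mulmxA -!mulmxA -!trmx_mul.
  rewrite !mulmxA [LHS]mxE [X in _ + X]mxE !prod11. by [].
Qed.


End P7.
Import P7.

Import GRing.Theory.

Theorem lemma2p6 (A B : nat) (Phi : 'I_B -> 'I_A) (Delta : R -> 'M[R]_B)
  (v vh : R -> 'rV[R]_B) (n k : nat) (z : seq 'I_A) :
  (forall e : R, (0 <= e)%R -> stochastic_mx (Delta e)) ->
  normally_parameterized Phi Delta ->
  (forall e : R, (0 <= e)%R -> in_W (v e)) ->
  (forall e : R, (0 <= e)%R -> in_W (vh e)) ->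
  (forall i, analytic0 (fun e => v e ord0 i)) ->
  (forall i, analytic0 (fun e => vh e ord0 i)) ->
  size z = n.+1 ->
  ord_le (p_v Phi Delta v (take n z)) k ->
  ord_le (p_v Phi Delta vh (take n z)) k ->
  (exists c, is_taylor0 c (p_cond Phi Delta v z)) /\
  (exists c, is_taylor0 c (p_cond Phi Delta vh z)) /\
  (forall c chat : nat -> R,
     is_taylor0 c (p_cond Phi Delta v z) ->
     is_taylor0 chat (p_cond Phi Delta vh z) ->
     forall j : nat, (j + 4 * k + 1 <= n)%N -> c j = chat j).
Proof.
  move=> Hst [Han [_ Hrank]] HWv HWvh Hva Hvha Hsz Hov Hovh.
  set w := take n z.
  have [z0 Hz] : exists z0, z = w ++ [:: z0].
    have Hs : size (drop n z) = 1%N by rewrite size_drop Hsz subSnn.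
    move: (cat_take_drop n z) Hs. case: (drop n z) => [|x [|y s]] //= E _.
    exists x. by rewrite -E.
  have Hpc : forall V e, p_cond Phi Delta V z e = Rdiv (Nm Phi Delta w z0 V e) (Dn Phi Delta w V e).
    move=> V e. rewrite /p_cond Hsz /= -/w {1}Hz /p_v row_word_cat /=.
    by rewrite /Nm /Dn /Wf /u /Da -mulmxA.
  have [k1 [Hk1 [D1 [r1 [Hr1 [HI1 [HD1 HA1]]]]]]] := side (w:=w) z0 Hst Han HWv Hva Hov.
  have [k2 [Hk2 [D2 [r2 [Hr2 [HI2 [HD2 HA2]]]]]]] := side (w:=w) z0 Hst Han HWvh Hvha Hovh.
  have Ap1 : An (p_cond Phi Delta v z) by apply: An_ext HA1 _ => e _; rewrite Hpc.
  have Ap2 : An (p_cond Phi Delta vh z) by apply: An_ext HA2 _ => e _; rewrite Hpc.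
  split; first by case: Ap1 => c Tc; exists c; apply: T_is_taylor0.
  split; first by case: Ap2 => c Tc; exists c; apply: T_is_taylor0.
  move=> c chat Hc Hch j Hj.
  have Tc := is_taylor0_T Hc. have Tch := is_taylor0_T Hch.
  set X := fun e => (u Phi Delta z0 e *m (onev B)^T - (onev B) *m (u Phi Delta z0 e)^T)%R.
  have Au : AM (u Phi Delta z0) := AM_mul (AM_Da Phi Han z0) (AM_const (onev B)).
  have HX : AM X.
    apply: AM_sub; apply: AM_mul => //; try apply: AM_tr => //; exact: AM_const.
  have HXa : forall e, ((X e)^T = - X e)%R.
    move=> e. rewrite /X linearB /= !trmx_mul !trmxK. by rewrite opprB.
  case: (key Han Hrank HX HXa w) => Y [HY [_ HYe]].
  set H := fun e => (v e *m Y e *m (vh e)^T)%R ord0 ord0.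
  have AH : An H.
    exact: (AM_mul (AM_mul (AM_V Hva) HY) (AM_tr (AM_V Hvha)) ord0 ord0).
  have Hsw : size w = n by rewrite /w size_take Hsz ltnSn.
  have Gid : forall e, e <> 0 ->
      Rminus (Rmult (Nm Phi Delta w z0 v e) (Dn Phi Delta w vh e))
             (Rmult (Nm Phi Delta w z0 vh e) (Dn Phi Delta w v e)) = Rmult (pow e n) (H e).
    move=> e He. have E := HYe e He (v e) (vh e).
    have := congr1 (fun M : 'M[R]_1 => M ord0 ord0) E. rewrite /= quad_id Hsw.
    rewrite [in RHS]mxE. move=> E2. rewrite /Nm /Dn /Wf. rewrite /H. etransitivity; last exact: E2. ring.
  set m := (n - k1 - k2)%N.
  have [h Th] : An (fun e => Rmult (H e) (Rmult (Rinv (D1 e)) (Rinv (D2 e)))).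
    apply: An_mult => //. exact: An_mult.
  have Tq := T_incr m Th.
  have Td := T_plus Tc (T_opp Tch).
  have Hmk : (k1 + k2 <= n)%N by lia.
  have Hjm : (j < m)%coq_nat by apply/ltP; rewrite /m; lia.
  have Hag : exists r, 0 < r /\ forall x, 0 < x < r ->
      p_cond Phi Delta v z x + - p_cond Phi Delta vh z x =
      x ^ m * (H x * (/ D1 x * / D2 x)).
    exists (Rmin r1 r2); split; first exact: Rmin_pos.
    move=> x Hx. have m1 := Rmin_l r1 r2. have m2 := Rmin_r r1 r2.
    have [E1 n1] := HD1 x (ltac:(split; lra)).
    have [E2 n2] := HD2 x (ltac:(split; lra)).
    have G := Gid x (ltac:(lra)).
    rewrite !Hpc. rewrite E1 E2 in G *.
    have Hn : x ^ n = x ^ m * x ^ k1 * x ^ k2.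
      rewrite -!pow_add. f_equal. rewrite /m. lia.
    rewrite Hn in G.
    have [N1 EN1] : exists N1 : R, N1 = Nm Phi Delta w z0 v x by eexists.
    have [N2 EN2] : exists N2 : R, N2 = Nm Phi Delta w z0 vh x by eexists.
    have [Hx' EH'] : exists Hx' : R, Hx' = H x by eexists.
    rewrite -EN1 -EN2 -EH' in G *.
    have px : forall q, x ^ q <> 0 by move=> q; apply: pow_nonzero; lra.
    have EH : Hx' = (N1 * (x ^ k2 * D2 x) - N2 * (x ^ k1 * D1 x)) / (x ^ m * x ^ k1 * x ^ k2).
      rewrite G. field. repeat split; apply: px.
    rewrite EH. field. repeat split => //; apply: px.
  have := T_unique Td Tq Hag j.
  rewrite /PS_plus PS_mult_cst incr_lt //. rewrite /Hierarchy.plus /=. lra.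
Qed.
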